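(* Let $f\in C(I)$, the partition $\Delta$ and the sequence of base functions $b=\{b_r\}$ (with $b_r\in C(I)$, $b_r(x_0)=f(x_0)$, $b_r(x_N)=f(x_N)$, $\sup_r\|b_r\|_\infty<\infty$) be fixed, and fix $s\in[0,1)$. Let $B$ be the set of sequences $\alpha=\{\alpha_r\}_{r\in\mathbb{N}}$, $\alpha_r=(\alpha_{1,r},\dots,\alpha_{N,r})$, with $\alpha_{i,r}\in Lip_d(I)$ and $\|\alpha\|_\infty\le s$, equipped with the metric $\|\alpha-\beta\|_\infty=\sup_r\max_i\|\alpha_{i,r}-\beta_{i,r}\|_\infty$. Then the map $\mathcal{B}:B\to C(I)$, $\mathcal{B}(\alpha)=f^\alpha_{\Delta,b}$, is continuous (with respect to the supremum norm on $C(I)$).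
   Context: $I=[x_0,x_N]$ with partition $\Delta: x_0<x_1<\dots<x_N$, $I_i=[x_{i-1},x_i]$, $l_i:I\to I_i$ the affine bijection $l_i(x)=\frac{x_i-x_{i-1}}{x_N-x_0}x+\frac{x_Nx_{i-1}-x_0x_i}{x_N-x_0}$, $Q_i=l_i^{-1}$. $Lip_d(I)$ ($0<d\le1$): real functions $g$ on $I$ with $\sup_{x\ne y}|g(x)-g(y)|/|x-y|^d<\infty$. $\|\alpha\|_\infty:=\sup_r\max_i\|\alpha_{i,r}\|_\infty$. For $\alpha\in B$, $f^\alpha_{\Delta,b}$ (the non-stationary $\alpha$-fractal function) is the uniform limit, independent of $g\in C_f(I)=\{g\in C(I):g(x_0)=f(x_0),g(x_N)=f(x_N)\}$, of $T^{\alpha_1}\circ\cdots\circ T^{\alpha_r}g$, where $(T^{\alpha_r}g)(x)=f(x)+\alpha_{i,r}(Q_i(x))(g-b_r)(Q_i(x))$ for $x\in I_i$. *)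

(* Defs.v *)
From Stdlib Require Import Reals.
From Coquelicot Require Import Coquelicot.
Open Scope R_scope.

Definition is_partition (xs : nat -> R) (N : nat) : Prop :=
  (1 <= N)%nat /\ forall i, (i < N)%nat -> xs i < xs (S i).

Definition inI (xs : nat -> R) (N : nat) (x : R) : Prop := xs 0%nat <= x <= xs N.

Definition contI (xs : nat -> R) (N : nat) (g : R -> R) : Prop :=
  forall x, inI xs N x -> forall eps, 0 < eps -> exists delta, 0 < delta /\
    forall y, inI xs N y -> Rabs (y - x) < delta -> Rabs (g y - g x) < eps.

Definition LipI (xs : nat -> R) (N : nat) (d : R) (g : R -> R) : Prop :=
  exists L, forall x y, inI xs N x -> inI xs N y -> x <> y ->
    Rabs (g x - g y) <= L * Rpower (Rabs (x - y)) d.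

Definition Qmap (xs : nat -> R) (N i : nat) (x : R) : R :=
  xs 0%nat + (xs N - xs 0%nat) * (x - xs (i - 1)%nat) / (xs i - xs (i - 1)%nat).

(* A coefficient sequence: alpha i r is alpha_{i,r} (i in 1..N, r in nat). *)
Definition coeffs := nat -> nat -> R -> R.

(* (T^{alpha_r} g)(x) = f x + alpha_{i,r}(Q_i x) (g - b_r)(Q_i x) for x in I_i.
   Knots x_i (i>=1) are assigned to I_i (half-open pieces (x_{i-1}, x_i]);
   at x_0 the formula gives f x_0 in any case (g, b_r in C_f).  Outside I
   the value is irrelevant and set to f x. *)
Fixpoint Tsum (xs : nat -> R) (N : nat) (ar : nat -> R -> R) (br g : R -> R)
  (i : nat) (x : R) : R :=
  match i with
  | O => 0
  | S k => Tsum xs N ar br g k x +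
      (if Rlt_le_dec (xs k) x then
         if Rle_dec x (xs (S k)) then
           let q := Qmap xs N (S k) x in ar (S k) q * (g q - br q)
         else 0
       else 0)
  end.

Definition Top (xs : nat -> R) (N : nat) (f : R -> R) (alpha : coeffs)
  (b : nat -> R -> R) (r : nat) (g : R -> R) : R -> R :=
  fun x => f x + Tsum xs N (fun i => alpha i r) (b r) g N x.

(* Titer n g = T^{alpha_0} o T^{alpha_1} o ... o T^{alpha_(n-1)} g
   (sequences indexed from r = 0). *)
Fixpoint Titer (xs : nat -> R) (N : nat) (f : R -> R) (alpha : coeffs)
  (b : nat -> R -> R) (n : nat) (g : R -> R) : R -> R :=
  match n with
  | O => g
  | S m => Titer xs N f alpha b m (Top xs N f alpha b m g)
  end.

(* The non-stationary alpha-fractal function f^alpha_{Delta,b}: the limit of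
   the iterates, computed with the starting function g = f (f is in C_f(I);
   the limit is independent of g in the paper). *)
Definition fractal (xs : nat -> R) (N : nat) (f : R -> R) (alpha : coeffs)
  (b : nat -> R -> R) (x : R) : R :=
  real (Lim_seq (fun n => Titer xs N f alpha b n f x)).

Definition inB (xs : nat -> R) (N : nat) (d s : R) (alpha : coeffs) : Prop :=
  (forall r i, (1 <= i <= N)%nat -> LipI xs N d (alpha i r)) /\
  (forall r i x, (1 <= i <= N)%nat -> inI xs N x -> Rabs (alpha i r x) <= s).

(* Main.v *)
Require Import Defs.
From Stdlib Require Import Reals Lra Lia.
From Coquelicot Require Import Coquelicot.
Open Scope R_scope.

Lemma xs_mono xs N : is_partition xs N -> forall i j, (i <= j)%nat -> (j <= N)%nat -> xs i <= xs j.
Proof.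
  intros [_ H] i j Hij; induction Hij; intros Hj; [lra|].
  specialize (IHHij ltac:(lia)). specialize (H m ltac:(lia)). lra.
Qed.

Lemma Tsum_zero xs N ar br g : is_partition xs N ->
  forall k x, (k <= N)%nat -> xs k < x -> Tsum xs N ar br g k x = 0.
Proof.
  intros [_ H]. induction k; intros x Hk Hx; simpl; [reflexivity|].
  rewrite IHk; [| lia | specialize (H k ltac:(lia)); lra].
  destruct (Rlt_le_dec (xs k) x); [destruct (Rle_dec x (xs (S k))); [lra|] |]; lra.
Qed.

Lemma Tsum_struct xs N : is_partition xs N -> forall k x, (k <= N)%nat ->
  xs 0%nat <= x <= xs k ->
  (x = xs 0%nat /\ forall ar br g, Tsum xs N ar br g k x = 0) \/
  exists i, (1 <= i <= k)%nat /\ xs (i-1)%nat < x <= xs i /\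
    forall ar br g, Tsum xs N ar br g k x =
      ar i (Qmap xs N i x) * (g (Qmap xs N i x) - br (Qmap xs N i x)).
Proof.
  intros HP. induction k; intros x Hk Hx.
  - left. split; [lra|]. reflexivity.
  - destruct (Rle_lt_dec x (xs k)) as [Hle|Hlt].
    + destruct (IHk x ltac:(lia) ltac:(lra)) as [[Hx0 HT]|[i [Hi [Hxi HT]]]].
      * left. split; auto. intros. simpl. rewrite HT.
        destruct (Rlt_le_dec (xs k) x); [lra|]. lra.
      * right. exists i. split; [lia|]. split; auto. intros. simpl. rewrite HT.
        destruct (Rlt_le_dec (xs k) x); [lra|]. ring.
    + right. exists (S k). split; [lia|]. replace (S k - 1)%nat with k by lia.
      split; [lra|]. intros. simpl.
      rewrite (Tsum_zero xs N ar br g HP k x ltac:(lia) Hlt).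
      destruct (Rlt_le_dec (xs k) x); [|lra].
      destruct (Rle_dec x (xs (S k))); [|lra]. ring.
Qed.

Lemma Qmap_in xs N i x : is_partition xs N -> (1 <= i <= N)%nat ->
  xs (i-1)%nat < x <= xs i -> inI xs N (Qmap xs N i x).
Proof.
  intros HP Hi Hx. unfold inI, Qmap.
  pose proof (xs_mono xs N HP 0 N ltac:(lia) ltac:(lia)) as H0N.
  set (a := xs (i-1)%nat) in *. set (c := xs i) in *.
  set (t := (x - a) / (c - a)).
  assert (Ht : t * (c - a) = x - a) by (unfold t; field; lra).
  assert (0 <= t <= 1) by nra.
  replace ((xs N - xs 0%nat) * (x - a) / (c - a)) with ((xs N - xs 0%nat) * t)
    by (unfold t, Rdiv; ring).
  nra.
Qed.

Lemma Rabs_minus_bound a b K M : Rabs a <= K -> Rabs b <= M -> Rabs (a - b) <= K + M.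
Proof.
  intros. unfold Rminus. eapply Rle_trans; [apply Rabs_triang|].
  rewrite Rabs_Ropp. lra.
Qed.

Lemma Top_diff xs N f alpha beta b r g h s D K M dl x :
  is_partition xs N -> inI xs N x ->
  (forall i y, (1 <= i <= N)%nat -> inI xs N y -> Rabs (alpha i r y) <= s) ->
  (forall i y, (1 <= i <= N)%nat -> inI xs N y -> Rabs (alpha i r y - beta i r y) <= dl) ->
  (forall y, inI xs N y -> Rabs (g y - h y) <= D) ->
  (forall y, inI xs N y -> Rabs (h y) <= K) ->
  (forall y, inI xs N y -> Rabs (b r y) <= M) ->
  0 <= s -> 0 <= dl ->
  Rabs (Top xs N f alpha b r g x - Top xs N f beta b r h x) <= s * D + dl * (K + M).
Proof.
  intros HP Hx Ha Hab Hgh Hh Hb Hs Hdl. unfold Top.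
  assert (HD : 0 <= D) by (pose proof (Hgh x Hx); pose proof (Rabs_pos (g x - h x)); lra).
  assert (HK : 0 <= K) by (pose proof (Hh x Hx); pose proof (Rabs_pos (h x)); lra).
  assert (HM : 0 <= M) by (pose proof (Hb x Hx); pose proof (Rabs_pos (b r x)); lra).
  destruct (Tsum_struct xs N HP N x ltac:(lia) Hx) as [[_ HT]|[i [Hi [Hxi HT]]]].
  - rewrite !HT. replace (f x + 0 - (f x + 0)) with 0 by ring. rewrite Rabs_R0.
    apply Rplus_le_le_0_compat; apply Rmult_le_pos; lra.
  - rewrite !HT. cbv beta. set (q := Qmap xs N i x).
    assert (Hq : inI xs N q) by (apply Qmap_in; auto).
    match goal with |- Rabs ?e <= _ =>
      replace e with (alpha i r q * (g q - h q) + (alpha i r q - beta i r q) * (h q - b r q)) by ring end.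
    eapply Rle_trans; [apply Rabs_triang|]. rewrite !Rabs_mult.
    apply Rplus_le_compat; apply Rmult_le_compat; try apply Rabs_pos; auto.
    apply Rabs_minus_bound; auto.
Qed.

Lemma Top_bnd xs N f alpha b r g s F K M x :
  is_partition xs N -> inI xs N x ->
  (forall i y, (1 <= i <= N)%nat -> inI xs N y -> Rabs (alpha i r y) <= s) ->
  (forall y, inI xs N y -> Rabs (f y) <= F) ->
  (forall y, inI xs N y -> Rabs (g y) <= K) ->
  (forall y, inI xs N y -> Rabs (b r y) <= M) ->
  0 <= s -> F <= K -> F + s * (K + M) <= K ->
  Rabs (Top xs N f alpha b r g x) <= K.
Proof.
  intros HP Hx Ha Hf Hg Hb Hs HFK HK. unfold Top.
  destruct (Tsum_struct xs N HP N x ltac:(lia) Hx) as [[_ HT]|[i [Hi [Hxi HT]]]].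
  - rewrite HT, Rplus_0_r. pose proof (Hf x Hx). lra.
  - rewrite HT. cbv beta. set (q := Qmap xs N i x).
    assert (Hq : inI xs N q) by (apply Qmap_in; auto).
    eapply Rle_trans; [apply Rabs_triang|]. rewrite Rabs_mult.
    pose proof (Hf x Hx).
    assert (Rabs (alpha i r q) * Rabs (g q - b r q) <= s * (K + M)).
    { apply Rmult_le_compat; try apply Rabs_pos; auto. apply Rabs_minus_bound; auto. }
    lra.
Qed.

Lemma Titer_diff xs N f alpha beta b s F K M dl :
  is_partition xs N ->
  (forall r i y, (1 <= i <= N)%nat -> inI xs N y -> Rabs (alpha i r y) <= s) ->
  (forall r i y, (1 <= i <= N)%nat -> inI xs N y -> Rabs (beta i r y) <= s) ->
  (forall r i y, (1 <= i <= N)%nat -> inI xs N y -> Rabs (alpha i r y - beta i r y) <= dl) ->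
  (forall y, inI xs N y -> Rabs (f y) <= F) ->
  (forall r y, inI xs N y -> Rabs (b r y) <= M) ->
  0 <= s < 1 -> 0 <= dl -> F <= K -> F + s * (K + M) <= K ->
  forall n g h D,
  (forall y, inI xs N y -> Rabs (g y) <= K) ->
  (forall y, inI xs N y -> Rabs (h y) <= K) ->
  (forall y, inI xs N y -> Rabs (g y - h y) <= D) ->
  forall x, inI xs N x ->
  Rabs (Titer xs N f alpha b n g x - Titer xs N f beta b n h x)
    <= s ^ n * D + dl * (K + M) * (1 - s ^ n) / (1 - s).
Proof.
  intros HP Ha Hbe Hab Hf Hb Hs Hdl HFK HK.
  induction n; intros g h D Hg Hh Hgh x Hx.
  - cbn [Titer]. replace (dl * (K + M) * (1 - s ^ 0) / (1 - s)) with 0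
      by (simpl; field; lra).
    simpl. rewrite Rmult_1_l, Rplus_0_r. auto.
  - cbn [Titer]. eapply Rle_trans.
    + apply (IHn (Top xs N f alpha b n g) (Top xs N f beta b n h) (s * D + dl * (K + M))); auto.
      all: try (intros y0 Hy0; apply Top_bnd with s F M; auto; lra).
      intros y0 Hy0; apply Top_diff; auto; lra.
    + right. simpl. field. lra.
Qed.

Lemma Titer_split xs N f alpha b s F K M :
  is_partition xs N ->
  (forall r i y, (1 <= i <= N)%nat -> inI xs N y -> Rabs (alpha i r y) <= s) ->
  (forall y, inI xs N y -> Rabs (f y) <= F) ->
  (forall r y, inI xs N y -> Rabs (b r y) <= M) ->
  0 <= s -> F <= K -> F + s * (K + M) <= K ->
  forall k n g, (forall y, inI xs N y -> Rabs (g y) <= K) ->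
  exists G, (forall y, inI xs N y -> Rabs (G y) <= K) /\
    forall x, Titer xs N f alpha b (n + k) g x = Titer xs N f alpha b n G x.
Proof.
  intros HP Ha Hf Hb Hs HFK HK. induction k; intros n g Hg.
  - exists g. split; auto. intros. rewrite Nat.add_0_r. reflexivity.
  - destruct (IHk n (Top xs N f alpha b (n + k) g)) as [G [HG HE]].
    + intros y Hy. apply Top_bnd with s F M; auto.
    + exists G. split; auto. intros x. rewrite Nat.add_succ_r. cbn [Titer]. apply HE.
Qed.

Lemma Titer_conv xs N f alpha b s F K M :
  is_partition xs N ->
  (forall r i y, (1 <= i <= N)%nat -> inI xs N y -> Rabs (alpha i r y) <= s) ->
  (forall y, inI xs N y -> Rabs (f y) <= F) ->
  (forall r y, inI xs N y -> Rabs (b r y) <= M) ->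
  0 <= s < 1 -> 0 <= F -> F <= K -> F + s * (K + M) <= K ->
  forall x, inI xs N x ->
  is_lim_seq (fun n => Titer xs N f alpha b n f x) (fractal xs N f alpha b x).
Proof.
  intros HP Ha Hf Hb Hs HF0 HFK HK x Hx.
  assert (Hfk : forall y, inI xs N y -> Rabs (f y) <= K)
    by (intros y Hy; pose proof (Hf y Hy); lra).
  assert (Hex : ex_finite_lim_seq (fun n => Titer xs N f alpha b n f x)).
  { apply ex_lim_seq_cauchy_corr. intros eps.
    assert (Hs1 : Rabs s < 1) by (rewrite Rabs_right; lra).
    assert (Hy : 0 < eps / (2 * K + 1)) by (apply Rdiv_lt_0_compat; [apply cond_pos | lra]).
    destruct (pow_lt_1_zero s Hs1 _ Hy) as [N0 HN0].
    assert (Hkey : forall n k, (N0 <= n)%nat ->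
      Rabs (Titer xs N f alpha b (n + k) f x - Titer xs N f alpha b n f x) < eps).
    { intros n k Hn.
      destruct (Titer_split xs N f alpha b s F K M HP Ha Hf Hb ltac:(lra) HFK HK k n f Hfk)
        as [G [HG HE]].
      rewrite HE.
      eapply Rle_lt_trans.
      - apply (Titer_diff xs N f alpha alpha b s F K M 0 HP Ha Ha); auto; try lra.
        + intros. rewrite Rminus_diag, Rabs_R0. lra.
        + intros y Hy'. apply (Rabs_minus_bound _ _ K K); auto.
      - specialize (HN0 n Hn). rewrite Rabs_right in HN0 by (apply Rle_ge, pow_le; lra).
        set (y := eps / (2 * K + 1)) in *.
        assert (y * (2 * K + 1) = eps) by (unfold y; field; lra).
        pose proof (cond_pos eps).
        replace (0 * (K + M) * (1 - s ^ n) / (1 - s)) with 0 by (field; lra).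
        pose proof (pow_le s n ltac:(lra)). nra. }
    exists N0. intros n m Hn Hm.
    destruct (Nat.le_ge_cases n m) as [Hnm|Hnm].
    - replace m with (n + (m - n))%nat by lia. rewrite Rabs_minus_sym. apply Hkey; auto.
    - replace n with (m + (n - m))%nat by lia. apply Hkey; auto. }
  destruct Hex as [l Hl]. unfold fractal. rewrite (is_lim_seq_unique _ _ Hl). simpl. exact Hl.
Qed.

Lemma f_bounded xs N f : is_partition xs N -> contI xs N f ->
  exists F, 0 <= F /\ forall y, inI xs N y -> Rabs (f y) <= F.
Proof.
  intros HP Hf.
  pose proof (xs_mono xs N HP 0 N ltac:(lia) ltac:(lia)) as Hac.
  set (a := xs 0%nat) in *. set (c := xs N) in *.
  set (cl := fun y => Rmax a (Rmin y c)).
  assert (Hcl : forall y, a <= y <= c -> cl y = y).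
  { intros y Hy. unfold cl, Rmax, Rmin.
    destruct (Rle_dec y c); destruct (Rle_dec a _); lra. }
  assert (Hcl2 : forall y, a <= cl y <= c).
  { intros y. unfold cl, Rmax, Rmin.
    destruct (Rle_dec y c); destruct (Rle_dec a _); lra. }
  assert (Hcl3 : forall y z, Rabs (cl y - cl z) <= Rabs (y - z)).
  { intros y z. unfold cl, Rmax, Rmin.
    destruct (Rle_dec y c); destruct (Rle_dec z c);
    repeat match goal with |- context [Rle_dec ?u ?v] => destruct (Rle_dec u v) end;
    unfold Rabs; repeat destruct Rcase_abs; lra. }
  set (fc := fun y => f (cl y)).
  assert (Hcont : forall c0, a <= c0 <= c -> continuity_pt fc c0).
  { intros c0 Hc0. unfold continuity_pt, continue_in, limit1_in, limit_in.
    intros eps Heps. destruct (Hf c0 Hc0 eps Heps) as [dl [Hdl H]].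
    exists dl. split; auto. intros y [_ Hy]. simpl in *. unfold R_dist in *.
    unfold fc. rewrite (Hcl c0 Hc0). apply H.
    - apply Hcl2.
    - pose proof (Hcl3 y c0) as H3. rewrite (Hcl c0 Hc0) in H3. lra. }
  destruct (continuity_ab_maj fc a c Hac Hcont) as [Mx [HMx _]].
  destruct (continuity_ab_min fc a c Hac Hcont) as [mx [Hmx _]].
  exists (Rabs (fc Mx) + Rabs (fc mx)). split.
  - pose proof (Rabs_pos (fc Mx)); pose proof (Rabs_pos (fc mx)); lra.
  - intros y Hy. specialize (HMx y Hy). specialize (Hmx y Hy).
    unfold fc in HMx, Hmx at 2. rewrite (Hcl y Hy) in HMx, Hmx.
    apply Rabs_le.
    pose proof (Rle_abs (fc Mx)). pose proof (Rle_abs (- fc mx)). rewrite Rabs_Ropp in *.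
    pose proof (Rabs_pos (fc Mx)); pose proof (Rabs_pos (fc mx)).
    fold (fc Mx) in *. fold (fc mx) in *. lra.
Qed.

Theorem mainTheorem11 (xs : nat -> R) (N : nat) (d s : R)
  (f : R -> R) (b : nat -> R -> R) :
  is_partition xs N ->
  0 < d <= 1 ->
  0 <= s < 1 ->
  contI xs N f ->
  (forall r, contI xs N (b r)) ->
  (forall r, b r (xs 0%nat) = f (xs 0%nat) /\ b r (xs N) = f (xs N)) ->
  (exists M, forall r x, inI xs N x -> Rabs (b r x) <= M) ->
  forall alpha : coeffs, inB xs N d s alpha ->
  forall eps, 0 < eps -> exists delta, 0 < delta /\
    forall beta : coeffs, inB xs N d s beta ->
      (forall r i x, (1 <= i <= N)%nat -> inI xs N x ->
         Rabs (alpha i r x - beta i r x) <= delta) ->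
      forall x, inI xs N x ->
        Rabs (fractal xs N f alpha b x - fractal xs N f beta b x) <= eps.
Proof.
  intros HP Hd Hs Hf Hbc Hbe [M HM] alpha [_ Ha] eps Heps.
  destruct (f_bounded xs N f HP Hf) as [F [HF0 HF]].
  pose proof (xs_mono xs N HP 0 N ltac:(lia) ltac:(lia)) as Hac.
  assert (HM0 : 0 <= M).
  { assert (inI xs N (xs 0%nat)) by (unfold inI; lra).
    pose proof (HM 0%nat _ H). pose proof (Rabs_pos (b 0%nat (xs 0%nat))). lra. }
  set (K := (F + M) / (1 - s)).
  assert (HKe : K * (1 - s) = F + M) by (unfold K; field; lra).
  assert (HK0 : 0 <= K) by (unfold K; apply Rmult_le_pos; [lra | left; apply Rinv_0_lt_compat; lra]).
  assert (HFK : F <= K) by nra.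
  assert (HK : F + s * (K + M) <= K) by nra.
  exists (eps * (1 - s) / (K + M + 1)). split.
  { apply Rdiv_lt_0_compat; [apply Rmult_lt_0_compat|]; lra. }
  intros beta [_ Hb] Hab x Hx.
  set (dl := eps * (1 - s) / (K + M + 1)) in *.
  assert (Hdl : 0 <= dl) by (unfold dl; apply Rmult_le_pos;
    [apply Rmult_le_pos; lra | left; apply Rinv_0_lt_compat; lra]).
  pose proof (Titer_conv xs N f alpha b s F K M HP Ha HF HM Hs HF0 HFK HK x Hx) as La.
  pose proof (Titer_conv xs N f beta b s F K M HP Hb HF HM Hs HF0 HFK HK x Hx) as Lb.
  pose proof (is_lim_seq_abs _ _ (is_lim_seq_minus' _ _ _ _ La Lb)) as L.
  assert (Hfk : forall y, inI xs N y -> Rabs (f y) <= K)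
    by (intros y Hy; pose proof (HF y Hy); lra).
  assert (Hn : forall n, Rabs (Titer xs N f alpha b n f x - Titer xs N f beta b n f x)
      <= dl * (K + M) / (1 - s)).
  { intros n.
    eapply Rle_trans.
    - apply (Titer_diff xs N f alpha beta b s F K M dl HP Ha Hb Hab HF HM Hs Hdl HFK HK n f f 0);
      auto; intros y Hy; rewrite Rminus_diag, Rabs_R0; lra.
    - pose proof (pow_le s n ltac:(lra)).
      assert (0 <= dl * (K + M)) by (apply Rmult_le_pos; lra).
      unfold Rdiv; rewrite Rmult_0_r, Rplus_0_l.
      apply Rmult_le_compat_r; [left; apply Rinv_0_lt_compat; lra | nra ]. }
  pose proof (is_lim_seq_le _ (fun _ => dl * (K + M) / (1 - s)) _ _ Hn L (is_lim_seq_const _)) as Hle.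
  simpl in Hle.
  eapply Rle_trans; [exact Hle|].
  unfold dl. replace (eps * (1 - s) / (K + M + 1) * (K + M) / (1 - s))
    with (eps * ((K + M) / (K + M + 1))) by (field; lra).
  assert ((K + M) / (K + M + 1) <= 1).
  { apply (Rmult_le_reg_r (K + M + 1)); [lra|]. unfold Rdiv.
    rewrite Rmult_assoc, Rinv_l by lra. lra. }
  nra.
Qed.
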